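(* Let $M\in\mathbb{R}^{p\times q}_+$ and suppose $M$ has a psd factorization of size $k$. Then $M$ admits a psd factorization $M_{ij}=\langle A_i,B_j\rangle$ with $A_i,B_j\in\mathcal{S}^k_+$ such that $\operatorname{trace}(A_i)\le k$ for all $i=1,\dots,p$ and $\operatorname{trace}(B_j)=\sum_{i=1}^pM_{ij}$ for all $j=1,\dots,q$.
   Context: $\mathcal{S}^k_+$ denotes the cone of $k\times k$ real symmetric positive semidefinite matrices, with inner product $\langle A,B\rangle = \operatorname{trace}(AB)$. A psd factorization of size $k$ of a nonnegative matrix $M\in\mathbb{R}^{p\times q}_+$ is a collection $A_1,\dots,A_p, B_1,\dots,B_q \in \mathcal{S}^k_+$ with $M_{ij} = \langle A_i, B_j\rangle$ for all $i,j$. *)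

(* Defs.v *)
From HB Require Import structures.
From mathcomp Require Import all_boot all_order all_algebra.
Set Implicit Arguments. Unset Strict Implicit. Unset Printing Implicit Defensive.
Import Order.TTheory GRing.Theory Num.Theory.
Local Open Scope ring_scope.

Definition psd (R : rcfType) (k : nat) (A : 'M[R]_k) : Prop :=
  A^T = A /\ forall x : 'cV[R]_k, 0 <= (x^T *m A *m x) 0 0.

Definition inner (R : rcfType) (k : nat) (A B : 'M[R]_k) : R := \tr (A *m B).

Definition psd_factorization (R : rcfType) (p q k : nat) (M : 'M[R]_(p, q))
  (A : 'I_p -> 'M[R]_k) (B : 'I_q -> 'M[R]_k) : Prop :=
  (forall i, psd (A i)) /\ (forall j, psd (B j)) /\
  (forall i j, M i j = inner (A i) (B j)).

(* Main.v *)
Require Import Defs.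
From HB Require Import structures.
From mathcomp Require Import all_boot all_order all_algebra.
From mathcomp Require Import ring lra.
Set Implicit Arguments. Unset Strict Implicit. Unset Printing Implicit Defensive.
Import Order.TTheory GRing.Theory Num.Theory.
Local Open Scope ring_scope.


Lemma bil_delta {R : rcfType} k (T : 'M[R]_k) (s t : 'I_k) :
  ((delta_mx s ord0 : 'cV[R]_k)^T *m T *m (delta_mx t ord0 : 'cV[R]_k)) 0 0 = T s t.
Proof. by rewrite trmx_delta -rowE -colE !mxE. Qed.

Lemma addE {R : rcfType} m n (A B : 'M[R]_(m,n)) i j : (A + B) i j = A i j + B i j.
Proof. by rewrite mxE. Qed.
Lemma scaleE {R : rcfType} m n c (A : 'M[R]_(m,n)) i j : (c *: A) i j = c * A i j.
Proof. by rewrite mxE. Qed.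

Lemma psd_sym_entry {R : rcfType} k (T : 'M[R]_k) : psd T -> forall s t, T s t = T t s.
Proof. by case=> hT _ s t; rewrite -{1}hT mxE. Qed.

Lemma psd_diag_ge0 {R : rcfType} k (T : 'M[R]_k) t : psd T -> 0 <= T t t.
Proof. by case=> _ h; rewrite -bil_delta; apply: h. Qed.

Lemma psd_zero_diag {R : rcfType} k (T : 'M[R]_k) t s : psd T -> T t t = 0 -> T t s = 0.
Proof.
move=> hT htt; have hs := psd_sym_entry hT.
case: hT => _ hq.
apply/eqP/negP => /negP ha.
pose c := - (T s s + 1) / (2 * T t s).
have := hq (delta_mx s ord0 + c *: delta_mx t ord0 : 'cV[R]_k).
rewrite !linearD /= !linearZ /= !mulmxDl ?mulmxDr -?scalemxAl -?scalemxAr.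
rewrite !(addE, scaleE, bil_delta) htt (hs s t) /c.
set a := T t s; set b := T s s.
set e := (X in 0 <= X -> _).
have -> : e = -1.
  rewrite /e; field.
  exact: ha.
by move=> h; lra.
Qed.

Lemma psd_congr {R : rcfType} k (T X : 'M[R]_k) : psd T -> psd (X^T *m T *m X).
Proof.
case=> hs hq; split.
  by rewrite !trmx_mul trmxK hs mulmxA.
move=> x; have := hq (X *m x).
by rewrite trmx_mul !mulmxA.
Qed.

Lemma entry_formula {R : rcfType} k (T : 'M[R]_k) (m : 'I_k) (V : 'rV[R]_k) i j :
  let Q := 1%:M + (delta_mx m ord0 : 'cV[R]_k) *m V in
  (Q^T *m T *m Q) i j = T i j + V 0 i * T m j + T i m * V 0 j + V 0 i * T m m * V 0 j.
Proof.
move=> Q; rewrite /Q [(_ + _)^T]raddfD /= trmx1 trmx_mul trmx_delta.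
rewrite !mulmxDl !mulmxDr !mul1mx !mulmx1.
rewrite !mulmxA -[V^T *m _ *m T]mulmxA -rowE -!colE.
rewrite !mxE !big_ord1 !mxE big_ord1 !mxE.
have -> : (0 : 'I_1) = ord0 by apply/val_inj.
ring.
Qed.

Lemma diag_step {R : rcfType} k (T : 'M[R]_k) (m : 'I_k) : psd T ->
  (forall i j : 'I_k, (i < m)%N -> i != j -> T i j = 0) ->
  exists Q : 'M[R]_k, Q \in unitmx /\
    forall i j : 'I_k, (i <= m)%N -> i != j -> (Q^T *m T *m Q) i j = 0.
Proof.
move=> hT hc.
pose V : 'rV[R]_k := \row_j (if j == m then 0 else - T m j / T m m).
pose E : 'cV[R]_k := delta_mx m ord0.
have hVE : V *m E = 0.
  by rewrite /E -colE; apply/matrixP => a b; rewrite !mxE eqxx.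
exists (1%:M + E *m V); split.
  apply: (proj1 (@mulmx1_unit _ _ _ (1%:M - E *m V) _)).
  rewrite mulmxDl mul1mx mulmxBr mulmx1 -mulmxA (mulmxA V) hVE mul0mx mulmx0.
  by rewrite subr0 subrK.
move=> i j hi hij; rewrite entry_formula.
have hs := psd_sym_entry hT.
case: (ltngtP i m) hi => // [him|/val_inj him] _.
  have him' : i != m by rewrite -(inj_eq val_inj) neq_ltn him.
  rewrite hc // (hc i m) // !mxE (negbTE him') (hs m i) (hc i m) //.
  by rewrite oppr0 !mul0r !addr0.
subst i.
rewrite !mxE eqxx eq_sym (negbTE hij) !mul0r !addr0.
have [h0|h0] := eqVneq (T m m) 0.
  by rewrite (psd_zero_diag j hT h0) h0 mul0r addr0.
by field.
Qed.

Lemma diag_upto {R : rcfType} k (T : 'M[R]_k) (n : nat) : psd T -> (n <= k)%N ->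
  exists P : 'M[R]_k, P \in unitmx /\
    forall i j : 'I_k, (i < n)%N -> i != j -> (P^T *m T *m P) i j = 0.
Proof.
move=> hT; elim: n => [|n IH] hn.
  by exists 1%:M; split; [exact: unitmx1|].
have [P [hP hPc]] := IH (ltnW hn).
have hT' := psd_congr P hT.
have [Q [hQ hQc]] := @diag_step _ _ _ (Ordinal hn) hT' hPc.
exists (P *m Q); split; first by rewrite unitmx_mul hP hQ.
move=> i j hi hij; have := hQc i j hi hij.
by rewrite trmx_mul !mulmxA.
Qed.

Lemma psd_sum {R : rcfType} k (I : finType) (F : I -> 'M[R]_k) :
  (forall i, psd (F i)) -> psd (\sum_i F i).
Proof.
move=> hF; split.
  rewrite (raddf_sum (@trmx R k k)) /=.
  by apply: eq_bigr => i _; case: (hF i).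
move=> x; rewrite mulmx_sumr mulmx_suml summxE.
by apply: sumr_ge0 => i _; case: (hF i) => _; apply.
Qed.

Lemma tr_sum {R : rcfType} k (I : finType) (F : I -> 'M[R]_k) :
  \tr (\sum_i F i) = \sum_i \tr (F i).
Proof. exact: raddf_sum. Qed.

Lemma proj_fix {R : rcfType} k (X : 'M[R]_k) (d : 'I_k -> R) : psd X ->
  (forall t, X t t <= d t) ->
  let e := \row_t (Num.sqrt (d t) * (Num.sqrt (d t))^-1) in
  diag_mx e *m X *m diag_mx e = X.
Proof.
move=> hX hd e.
have hs := psd_sym_entry hX.
have key : forall t, Num.sqrt (d t) / Num.sqrt (d t) = 1 \/ (forall s, X t s = 0).
  move=> t.
  have [h0|h0] := eqVneq (Num.sqrt (d t)) 0.
    right => s; apply: psd_zero_diag => //.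
    apply/eqP; rewrite eq_le psd_diag_ge0 // andbT.
    by apply: (le_trans (hd t)); rewrite -sqrtr_eq0 h0.
  by left; rewrite mulfV.
apply/matrixP => i j; rewrite mul_mx_diag mxE mul_diag_mx !mxE.
case: (key i) => [-> | hi]; last by rewrite hi mulr0 mul0r.
case: (key j) => [-> | hj]; last by rewrite hs hj mulr0 mul0r.
by rewrite mul1r mulr1.
Qed.

Theorem lemma2p10 (R : rcfType) (p q k : nat) (M : 'M[R]_(p, q))
  (hM : forall i j, 0 <= M i j)
  (hfac : exists (A : 'I_p -> 'M[R]_k) (B : 'I_q -> 'M[R]_k),
            psd_factorization M A B) :
  exists (A : 'I_p -> 'M[R]_k) (B : 'I_q -> 'M[R]_k),
    psd_factorization M A B /\
    (forall i, \tr (A i) <= k%:R) /\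
    (forall j, \tr (B j) = \sum_(i < p) M i j).
Proof.
case: hfac => A [B [hA [hB hAB]]].
pose S := \sum_i A i.
have hS : psd S := psd_sum hA.
have [P [hP hPd]] := diag_upto hS (leqnn k).
pose At l := P^T *m A l *m P.
pose D := P^T *m S *m P.
have hD : D = \sum_l At l by rewrite /D /S mulmx_sumr mulmx_suml.
have hAt l : psd (At l) := psd_congr P (hA l).
have hDpsd : psd D := psd_congr P hS.
pose d t := D t t.
have hd0 t : 0 <= d t := psd_diag_ge0 t hDpsd.
have hle l t : At l t t <= d t.
  rewrite /d hD summxE (bigD1 l) //= lerDl.
  by apply: sumr_ge0 => m _; exact: psd_diag_ge0.
pose g := \row_t (Num.sqrt (d t))^-1.
pose h := \row_t Num.sqrt (d t).
pose e := \row_t (Num.sqrt (d t) * (Num.sqrt (d t))^-1).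
pose W := invmx P.
have hPW : P *m W = 1%:M := mulmxV hP.
have hWP' : W^T *m P^T = 1%:M by rewrite -trmx_mul hPW trmx1.
have hHH : diag_mx h *m diag_mx h = D.
  apply/matrixP => i j; rewrite mul_diag_mx !mxE.
  case: (eqVneq i j) => [<-|hij].
    by rewrite mulr1n -expr2 sqr_sqrtr; [rewrite /d /D mxE | exact: hd0].
  rewrite mulr0n mulr0; have := hPd i j (ltn_ord i) hij; rewrite mxE => h0; by rewrite h0.
have hHG : diag_mx h *m diag_mx g = diag_mx e.
  by apply/matrixP => i j; rewrite mul_diag_mx !mxE mulrnAr.
have hGH : diag_mx g *m diag_mx h = diag_mx e.
  by apply/matrixP => i j; rewrite mul_diag_mx !mxE mulrnAr mulrC.
exists (fun i => (P *m diag_mx g)^T *m A i *m (P *m diag_mx g)).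
exists (fun j => (W^T *m diag_mx h)^T *m B j *m (W^T *m diag_mx h)).
split; [split; [|split]|split].
- by move=> i; apply: psd_congr.
- by move=> j; apply: psd_congr.
- move=> i j; rewrite hAB /inner; symmetry.
  transitivity (\tr ((diag_mx h *m diag_mx g) *m At i *m (diag_mx g *m diag_mx h)
       *m (W *m B j *m W^T))).
    by rewrite !trmx_mul !tr_diag_mx trmxK !mulmxA mxtrace_mulC !mulmxA.
  rewrite hHG hGH proj_fix //.
  rewrite /At !mulmxA -(mulmxA _ P W) hPW mulmx1 mxtrace_mulC !mulmxA hWP' mul1mx.
  done.
- move=> i /=.
  rewrite !trmx_mul tr_diag_mx.
  have -> : diag_mx g *m P^T *m A i *m (P *m diag_mx g) = diag_mx g *m At i *m diag_mx g.
    by rewrite /At !mulmxA.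
  have -> : k%:R = \sum_(t < k) (1 : R) by rewrite sumr_const card_ord.
  rewrite /mxtrace; apply: ler_sum => t _.
  rewrite mul_mx_diag mxE mul_diag_mx mxE [g 0 t]mxE.
  case: (eqVneq (Num.sqrt (d t)) 0) => [->|hne]; first by rewrite invr0 !(mul0r, mulr0) ler01.
  have dpos : 0 < d t.
    rewrite lt_def hd0 andbT; apply: contra hne => /eqP ->; by rewrite sqrtr0.
  rewrite mulrAC mulrC -invfM -expr2 sqr_sqrtr ?hd0 // ler_pdivrMr // mul1r.
  exact: hle.
- move=> j /=.
  rewrite !trmx_mul tr_diag_mx trmxK.
  transitivity (\tr ((diag_mx h *m diag_mx h) *m (W *m B j *m W^T))).
    by rewrite !mulmxA mxtrace_mulC !mulmxA.
  rewrite hHH /D !mulmxA -(mulmxA _ P W) hPW mulmx1 mxtrace_mulC !mulmxA hWP' mul1mx.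
  rewrite /S mulmx_suml tr_sum; apply: eq_bigr => i _.
  by rewrite hAB.
Qed.
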